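(* Let $(\mathcal X,R)$ be a quantum poset such that $\mathcal X$ has only finitely many atoms. Then $(\mathcal X,R)$ is a quantum cpo.
   Context: A quantum set $\mathcal X$ is a set $\mathrm{At}(\mathcal X)$ of nonzero finite-dimensional Hilbert spaces (atoms). A relation $R$ from $\mathcal X$ to $\mathcal Y$ is a choice of subspaces $R(X,Y)\subseteq L(X,Y)$ for all atoms. Composition: $(S\circ R)(X,Z)=\mathrm{span}\{sr: r\in R(X,Y), s\in S(Y,Z), Y\in\mathrm{At}(\mathcal Y)\}$; identity $I_{\mathcal X}(X,X)=\mathbb C 1_X$ and $0$ off the diagonal; adjoint $R^\dagger(Y,X)=\{r^\dagger: r\in R(X,Y)\}$; $R\le S$ entrywise inclusion; $\bigwedge$ entrywise intersection. A function $F:\mathcal X\to\mathcal Y$ is a relation with $F\circ F^\dagger\le I_{\mathcal Y}$ and $F^\dagger\circ F\ge I_{\mathcal X}$. A quantum poset is $(\mathcal X,R)$ with $I_{\mathcal X}\le R$, $R\circ R\le R$, $R\wedge R^\dagger\le I_{\mathcal X}$. For functions $F,G:\mathcal W\to\mathcal X$, $F\sqsubseteq G$ means $G\le R\circ F$. For an increasing sequence $K_1\sqsubseteq K_2\sqsubseteq\cdots:\mathcal W\to\mathcal X$, write $K_n\nearrow K_\infty$ if $K_\infty:\mathcal W\to\mathcal X$ is a function with $R\circ K_\infty=\bigwedge_{n}R\circ K_n$. $\mathbf H_d$ denotes the quantum set whose single atom is $\mathbb C^d$. A quantum poset $(\mathcal X,R)$ is a quantum cpo if for every $d\ge 1$ and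 every increasing sequence $K_1\sqsubseteq K_2\sqsubseteq\cdots:\mathbf H_d\to\mathcal X$ there is a function $K_\infty:\mathbf H_d\to\mathcal X$ with $K_n\nearrow K_\infty$. *)

(* Defs.v *)
From HB Require Import structures.
From mathcomp Require Import all_boot all_order all_algebra.
From mathcomp Require Import complex.
From mathcomp Require Import reals.
Set Implicit Arguments. Unset Strict Implicit. Unset Printing Implicit Defensive.
Import Order.TTheory GRing.Theory Num.Theory.
Local Open Scope ring_scope.

(* A quantum set with finitely many atoms: the atoms are indexed by a finite
   type; the atom with index i is the Hilbert space C^(qdim i) (standard inner
   product), which is nonzero. *)
Record qset := QSet {
  qidx :> finType;
  qdim : qidx -> nat;
  qdim_gt0 : forall i, (0 < qdim i)%N }.

Definition qH (d : nat) (hd : (0 < d)%N) : qset :=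
  @QSet unit (fun _ => d) (fun _ => hd).

Section QRel.
Variable C : numClosedFieldType.

(* A relation X -> Y: for every pair of atoms (x, y) a subspace of
   L(C^(qdim x), C^(qdim y)) = 'M_(qdim y, qdim x), encoded (as in mxalgebra)
   by a square matrix whose row space is spanned by the mxvec-encodings of
   the members of the subspace. *)
Definition qrel (X Y : qset) :=
  forall (x : X) (y : Y), 'M[C]_(qdim y * qdim x).

Definition qmem (m n : nat) (A : 'M[C]_(m, n)) (S : 'M[C]_(m * n)) : Prop :=
  (mxvec A <= S)%MS.

Definition hadj (m n : nat) (A : 'M[C]_(m, n)) : 'M[C]_(n, m) :=
  (map_mx Num.conj A)^T.

(* composition: (S o R)(x, z) = span { s r | r in R(x,y), s in S(y,z), y } *)
Definition qcomp (X Y Z : qset) (S : qrel Y Z) (R : qrel X Y) : qrel X Z :=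
  fun x z =>
    (\sum_(y : Y) \sum_(a < qdim y * qdim x) \sum_(b < qdim z * qdim y)
       << mxvec (vec_mx (row b (S y z)) *m vec_mx (row a (R x y))) >>)%MS.

Definition qid (X : qset) : qrel X X :=
  fun x x' => if x == x' then
                << mxvec (pid_mx (qdim x) : 'M[C]_(qdim x', qdim x)) >>%MS
              else 0.

(* adjoint relation: R^dag(y, x) = { r^dag | r in R(x, y) } *)
Definition qadj (X Y : qset) (R : qrel X Y) : qrel Y X :=
  fun y x => << \matrix_(k < qdim y * qdim x)
                   mxvec (hadj (vec_mx (row k (R x y)))) >>%MS.

Definition qle (X Y : qset) (R S : qrel X Y) : Prop :=
  forall x y, (R x y <= S x y)%MS.

Definition qmeet (X Y : qset) (R S : qrel X Y) : qrel X Y :=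
  fun x y => (R x y :&: S x y)%MS.

Definition qfun (X Y : qset) (F : qrel X Y) : Prop :=
  qle (qcomp F (qadj F)) (@qid Y) /\ qle (@qid X) (qcomp (qadj F) F).

Definition qposet (X : qset) (R : qrel X X) : Prop :=
  [/\ qle (@qid X) R, qle (qcomp R R) R & qle (qmeet R (qadj R)) (@qid X)].

Definition qsqle (W X : qset) (R : qrel X X) (F G : qrel W X) : Prop :=
  qle G (qcomp R F).

Definition qbigmeet_eq (X Y : qset) (S : qrel X Y) (T : nat -> qrel X Y) : Prop :=
  forall x y (A : 'M[C]_(qdim y, qdim x)),
    qmem A (S x y) <-> (forall n, qmem A (T n x y)).

Definition qsup_lim (W X : qset) (R : qrel X X) (K : nat -> qrel W X)
  (Kinf : qrel W X) : Prop :=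
  qfun Kinf /\ qbigmeet_eq (qcomp R Kinf) (fun n => qcomp R (K n)).

Definition qcpo (X : qset) (R : qrel X X) : Prop :=
  forall (d : nat) (hd : (0 < d)%N) (K : nat -> qrel (qH hd) X),
    (forall n, qfun (K n)) ->
    (forall n, qsqle R (K n) (K n.+1)) ->
    exists Kinf : qrel (qH hd) X, qsup_lim R K Kinf.

End QRel.

(* Main.v *)
Require Import Defs.
From HB Require Import structures.
From mathcomp Require Import all_boot all_order all_algebra.
From mathcomp Require Import complex reals.
From Stdlib Require Import Classical.

Set Implicit Arguments. Unset Strict Implicit. Unset Printing Implicit Defensive.
Import Order.TTheory GRing.Theory Num.Theory.
Local Open Scope ring_scope.

Section Aux.
Variable C : numClosedFieldType.

Lemma lin_le (m n p : nat) (v : 'rV[C]_m) (S : 'M[C]_(n, m)) (M : 'M[C]_(m, p))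
   (T : 'M[C]_p) :
  (v <= S)%MS -> (forall k, row k S *m M <= T)%MS -> (v *m M <= T)%MS.
Proof.
move=> vS H; apply: submx_trans (submxMr M vS) _.
by apply/row_subP => k; rewrite row_mul.
Qed.

Lemma sum_mul_le (I : finType) (P : pred I) n p (A_ : I -> 'M[C]_n)
  (M : 'M[C]_(n, p)) (T : 'M[C]_p) :
  (forall i, P i -> A_ i *m M <= T)%MS -> ((\sum_(i | P i) A_ i)%MS *m M <= T)%MS.
Proof.
move=> H; elim/big_rec: _ => [|i S Pi IH]; first by rewrite mul0mx sub0mx.
by rewrite addsmxMr addsmx_sub H.
Qed.

Lemma comp_mulle (X Y Z : qset) (S : qrel C Y Z) (R : qrel C X Y) x z p
  (M : 'M[C]_(qdim z * qdim x, p)) (T : 'M[C]_p) :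
  (forall y (a : 'I_(qdim y * qdim x)) (b : 'I_(qdim z * qdim y)),
     mxvec (vec_mx (row b (S y z)) *m vec_mx (row a (R x y))) *m M <= T)%MS ->
  (qcomp S R x z *m M <= T)%MS.
Proof.
move=> H; rewrite /qcomp.
apply: sum_mul_le => y _; apply: sum_mul_le => a _; apply: sum_mul_le => b _.
by rewrite (eqmxMr _ (genmxE _)).
Qed.

Lemma comp_le (X Y Z : qset) (S : qrel C Y Z) (R : qrel C X Y) x z
  (T : 'M[C]_(qdim z * qdim x)) :
  (forall y (a : 'I_(qdim y * qdim x)) (b : 'I_(qdim z * qdim y)),
     mxvec (vec_mx (row b (S y z)) *m vec_mx (row a (R x y))) <= T)%MS ->
  (qcomp S R x z <= T)%MS.
Proof.
move=> H; rewrite -[qcomp S R x z]mulmx1; apply: comp_mulle => y a b.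
by rewrite mulmx1.
Qed.

Lemma mem_comp (X Y Z : qset) (S : qrel C Y Z) (R : qrel C X Y) x y z
  (s : 'M[C]_(qdim z, qdim y)) (r : 'M[C]_(qdim y, qdim x)) :
  (mxvec s <= S y z)%MS -> (mxvec r <= R x y)%MS ->
  (mxvec (s *m r) <= qcomp S R x z)%MS.
Proof.
move=> sS rR.
rewrite -[s *m r]/(mulmxr r s) -mul_vec_lin.
apply: (lin_le sS) => b; rewrite -{1}[row b (S y z)]vec_mxK mul_vec_lin /=.
rewrite -[vec_mx (row b (S y z)) *m r]/(mulmx (vec_mx (row b (S y z))) r) -mul_vec_lin.
apply: (lin_le rR) => a; rewrite -{1}[row a (R x y)]vec_mxK mul_vec_lin /=.
rewrite /qcomp; apply: (sumsmx_sup y) => //; apply: (sumsmx_sup a) => //.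
apply: (sumsmx_sup b) => //; by rewrite genmxE.
Qed.

Lemma vrow_mem m n (A : 'M[C]_(m * n)) k : (mxvec (vec_mx (row k A)) <= A)%MS.
Proof. by rewrite vec_mxK row_sub. Qed.

Lemma comp_mono2 (X Y Z : qset) (S : qrel C Y Z) (R R' : qrel C X Y) :
  qle R R' -> qle (qcomp S R) (qcomp S R').
Proof.
move=> H x z; apply: comp_le => y a b; apply: mem_comp; first exact: vrow_mem.
exact: submx_trans (vrow_mem _ _) (H _ _).
Qed.

Lemma comp_mono1 (X Y Z : qset) (S S' : qrel C Y Z) (R : qrel C X Y) :
  qle S S' -> qle (qcomp S R) (qcomp S' R).
Proof.
move=> H x z; apply: comp_le => y a b; apply: mem_comp; last exact: vrow_mem.
exact: submx_trans (vrow_mem _ _) (H _ _).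
Qed.

Lemma comp_assoc_le (W X : qset) (R : qrel C X X) (K : qrel C W X) :
  qle (qcomp R (qcomp R K)) (qcomp (qcomp R R) K).
Proof.
move=> x z; apply: comp_le => y a b.
set s := vec_mx (row b (R y z)).
rewrite -[s *m _]/(mulmx s (vec_mx (row a (qcomp R K x y)))) -mul_vec_lin vec_mxK.
apply: submx_trans (submxMr _ (row_sub _ _)) _.
apply: comp_mulle => y' a' b'; rewrite mul_vec_lin /= mulmxA.
apply: mem_comp; last exact: vrow_mem.
apply: mem_comp; exact: vrow_mem.
Qed.

Lemma qle_trans (X Y : qset) (A B D : qrel C X Y) : qle A B -> qle B D -> qle A D.
Proof. by move=> H1 H2 x y; apply: submx_trans (H1 x y) (H2 x y). Qed.

Lemma nat_stab (f : nat -> nat) :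
  (forall n m, (n <= m)%N -> (f m <= f n)%N) ->
  forall v n, (f n <= v)%N -> exists N, forall m, (N <= m)%N -> f m = f N.
Proof.
move=> Hf; elim=> [|v IH] n Hn.
  exists n => m nm; apply/eqP; rewrite eqn_leq Hf //=.
  by apply: leq_trans Hn _.
case: (classic (exists m, (n <= m)%N /\ (f m < f n)%N)).
  move=> [m [nm lt]]; apply: (IH m); rewrite -ltnS; exact: leq_trans lt Hn.
move=> Hno; exists n => m nm; apply/eqP; rewrite eqn_leq Hf //=.
rewrite leqNgt; apply/negP => lt; apply: Hno; by exists m.
Qed.

End Aux.

Local Close Scope ring_scope.

Theorem mainTheorem7 (R : realType) (X : qset) (Rel : qrel R[i] X X) :
  qposet Rel -> qcpo Rel.
Proof.
move=> [Hid Htr Has] d hd K Kfun Kinc.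
pose P n := qcomp Rel (K n).
have dec n : qle (P n.+1) (P n).
  apply: qle_trans (comp_mono2 Rel (Kinc n)) _.
  apply: qle_trans (comp_assoc_le Rel (K n)) _.
  exact: comp_mono1 Htr.
have decm n m : (n <= m)%N -> qle (P m) (P n).
  elim: m => [|m IH]; first by rewrite leqn0 => /eqP ->; move=> x y.
  rewrite leq_eqVlt => /orP [/eqP <- | lt]; first by move=> x y.
  exact: qle_trans (dec m) (IH lt).
pose Phi n := (\sum_(p : qH hd * X) \rank (P n p.1 p.2))%N.
have Phid n m : (n <= m)%N -> (Phi m <= Phi n)%N.
  move=> nm; apply: leq_sum => p _; exact: mxrankS (decm _ _ nm _ _).
have [N HN] := nat_stab Phid (leqnn (Phi 0%N)).
have stab m : (N <= m)%N -> qle (P N) (P m).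
  move=> Nm.
  have H := @leqif_sum _ xpredT (fun p => (P N p.1 p.2 <= P m p.1 p.2)%MS)
     (fun p => \rank (P m p.1 p.2)) (fun p => \rank (P N p.1 p.2))
     (fun p _ => mxrank_leqif_sup (decm _ _ Nm p.1 p.2)).
  have := H.2; rewrite -/(Phi m) -/(Phi N) HN // eqxx => /esym /forallP Hall.
  by move=> x y; have := Hall (x, y).
exists (K N); split; first exact: Kfun.
move=> x y A; split.
  move=> HA n; case: (leqP n N) => h.
    exact: submx_trans HA (decm _ _ h x y).
  exact: submx_trans HA (stab _ (ltnW h) x y).
by move=> H; apply: H.
Qed.
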